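(* Suppose the conditional gradient algorithm chooses $\theta_k$ by the exact line search \[ \theta_k\in\arg\min_{\theta\in[0,1]}\{(1-\theta)\mathrm{gap}(x_k,g_k)+\mathcal{D}(x_k,s_k,\theta)\}, \] and suppose $q>1$, $r\in[0,1]$ are such that $(\mathcal D,\mathrm{gap})$ satisfies the $(q,r)$-growth property with some finite constant $M>0$. Then for $k=0,1,\dots$ \[ \mathrm{gap}_{k+1}\le \mathrm{gap}_k\Big(1-\tfrac{q-1}{q}\min\Big\{1,\Big(\tfrac{\mathrm{gap}_k^{1-r}}{M}\Big)^{\frac1{q-1}}\Big\}\Big). \] If $r=1$ then $\mathrm{gap}_k\le \mathrm{gap}_0\big(1-\frac{q-1}{q}\min\{1,M^{-1/(q-1)}\}\big)^k$ for all $k$. If $r\in[0,1)$ then $\mathrm{gap}_k\le\mathrm{gap}_0\big(1-\frac{q-1}{q}\big)^k$ for $k=0,1,\dots,k_0$, where $k_0$ is the smallest $k$ with $\mathrm{gap}_k^{1-r}\le M$, and for all $k\ge k_0$ \[ \mathrm{gap}_k\le\Big(\mathrm{gap}_{k_0}^{\frac{r-1}{q-1}}+\frac{1-r}{q}\cdot\frac{1}{M^{\frac1{q-1}}}\,(k-k_0)\Big)^{\frac{q-1}{r-1}}. \]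
   Context: Let $f,\Psi:\mathbb{R}^n\to\mathbb{R}\cup\{\infty\}$ be closed proper convex functions such that (A1) $f$ is differentiable on $\mathrm{dom}(\Psi)$, and (A2) for every $x\in\mathrm{dom}(f)$ the set $\arg\min_s\{\langle\nabla f(x),s\rangle+\Psi(s)\}$ is nonempty. $f^*,\Psi^*$ denote convex conjugates; $\arg\min_y\{\langle g,y\rangle+\Psi(y)\}=\partial\Psi^*(-g)$. $D_f(y,x)=f(y)-f(x)-\langle\nabla f(x),y-x\rangle$. Duality gap: $\mathrm{gap}(x,u)=f(x)+\Psi(x)+f^*(u)+\Psi^*(-u)$ for $x\in\mathrm{dom}(\Psi)$, $u\in\mathrm{dom}(f^* )$. For $x,s\in\mathrm{dom}(\Psi)$, $\theta\in[0,1]$: $\mathcal{D}(x,s,\theta)=D_f(x+\theta(s-x),x)+\Psi(x+\theta(s-x))-(1-\theta)\Psi(x)-\theta\Psi(s)$. Conditional gradient algorithm: given $x_0\in\mathrm{dom}(\Psi)$, for $k=0,1,2,\dots$ let $g_k=\nabla f(x_k)$, pick $s_k\in\arg\min_y\{\langle g_k,y\rangle+\Psi(y)\}$ and $\theta_k\in[0,1]$, and set $x_{k+1}=(1-\theta_k)x_k+\theta_k s_k$. The best duality gaps are $\mathrm{gap}_k=\min_{i=0,\dots,k}\mathrm{gap}(x_k,g_i)$. $(q,r)$-growth property ($q>1$, $r\in[0,1]$): there is a finite $M>0$ such that for all $x\in\mathrm{dom}(\Psi)$, $g=\nabla f(x)$ and $s\in\partial\Psi^*(-g)$, $\mathcal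 D(x,s,\theta)\le \frac{M\theta^q}{q}\mathrm{gap}(x,g)^r$ for all $\theta\in[0,1]$. *)

(* Defs.v *)
From HB Require Import structures.
From mathcomp Require Import all_boot all_order all_algebra.
From mathcomp Require Import all_classical all_reals all_analysis.
Set Implicit Arguments. Unset Strict Implicit. Unset Printing Implicit Defensive.
Import Order.TTheory GRing.Theory Num.Theory.
Import numFieldNormedType.Exports.
Local Open Scope classical_set_scope.
Local Open Scope ring_scope.

Section Defs.
Variables (R : realType) (n : nat).
Local Notation V := 'rV[R]_n.

Definition dot (x y : V) : R := \sum_(i < n) x ord0 i * y ord0 i.

Definition dom (h : V -> \bar R) : set V := [set x | (h x < +oo)%E].

(* closed = lower semicontinuous = closed epigraph *)
Definition closed_fun (h : V -> \bar R) : Prop :=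
  closed [set p : V * R | (h p.1 <= p.2%:E)%E].

Definition proper_fun (h : V -> \bar R) : Prop :=
  (forall x, h x != -oo%E) /\ (exists x, (h x < +oo)%E).

Definition convex_fun (h : V -> \bar R) : Prop :=
  forall (x y : V) (t : R), 0 <= t <= 1 ->
    (h (t *: x + (1 - t) *: y)%R <= t%:E * h x + (1 - t)%:E * h y)%E.

Definition cpc (h : V -> \bar R) : Prop :=
  [/\ closed_fun h, proper_fun h & convex_fun h].

Definition is_grad (h : V -> \bar R) (x g : V) : Prop :=
  [/\ \forall y \near x, h y \is a fin_num,
      differentiable (fine \o h) x &
      forall v : V, 'd (fine \o h) x v = dot g v].

Definition conjugate (h : V -> \bar R) (u : V) : \bar R :=
  ereal_sup (range (fun x => ((dot u x)%:E - h x)%E)).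

Definition subdiff (h : V -> \bar R) (v : V) : set V :=
  [set s | h v \is a fin_num /\ forall w, (h v + (dot s (w - v)%R)%:E <= h w)%E].

Definition lin_argmin (Psi : V -> \bar R) (g : V) : set V :=
  [set s | forall y, ((dot g s)%:E + Psi s <= (dot g y)%:E + Psi y)%E].

Definition gap (f Psi : V -> \bar R) (x u : V) : \bar R :=
  (f x + Psi x + conjugate f u + conjugate Psi (- u)%R)%E.

Definition bregman (f : V -> \bar R) (g y x : V) : \bar R :=
  (f y - f x - (dot g (y - x)%R)%:E)%E.

Definition Dcal (f Psi : V -> \bar R) (g x s : V) (theta : R) : \bar R :=
  (bregman f g (x + theta *: (s - x))%R x + Psi (x + theta *: (s - x))%R
   - (1 - theta)%:E * Psi x - theta%:E * Psi s)%E.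

Definition growth (f Psi : V -> \bar R) (q r M : R) : Prop :=
  forall x g s, x \in dom Psi -> is_grad f x g -> s \in subdiff (conjugate Psi) (- g) ->
  forall theta, 0 <= theta <= 1 ->
    (Dcal f Psi g x s theta <= (M * powR theta q / q)%:E * poweR (gap f Psi x g) r)%E.

(* best duality gaps: gap_k = min_{i <= k} gap(x_k, g_i) *)
Definition best_gap (f Psi : V -> \bar R) (x g : nat -> V) (k : nat) : \bar R :=
  \big[Order.min/+oo%E]_(i < k.+1) gap f Psi (x k) (g i).

End Defs.

(* Main.v *)
Require Import Defs.
From HB Require Import structures.
From mathcomp Require Import all_boot all_order all_algebra.
From mathcomp Require Import all_classical all_reals all_analysis.
From mathcomp Require Import ring lra.
Import Order.TTheory GRing.Theory Num.Theory.
Import numFieldNormedType.Exports.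
Local Open Scope classical_set_scope.
Local Open Scope ring_scope.

Section Aux.
Variables (R : realType) (n : nat).
Local Notation V := 'rV[R]_n.

Lemma dotC (a b : V) : dot a b = dot b a.
Proof. by rewrite /dot; apply: eq_bigr => i _; rewrite mulrC. Qed.

Lemma dotDr (a b c : V) : dot a (b + c) = dot a b + dot a c.
Proof. by rewrite /dot -big_split; apply: eq_bigr => i _; rewrite mxE mulrDr. Qed.

Lemma dotNr (a b : V) : dot a (- b) = - dot a b.
Proof. by rewrite /dot -sumrN; apply: eq_bigr => i _; rewrite mxE mulrN. Qed.

Lemma dotBr (a b c : V) : dot a (b - c) = dot a b - dot a c.
Proof. by rewrite dotDr dotNr. Qed.

Lemma dotZr (a b : V) t : dot a (t *: b) = t * dot a b.
Proof. by rewrite /dot mulr_sumr; apply: eq_bigr => i _; rewrite mxE mulrCA. Qed.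

Lemma dotDl (a b c : V) : dot (b + c) a = dot b a + dot c a.
Proof. by rewrite dotC dotDr !(dotC a). Qed.
Lemma dotNl (a b : V) : dot (- b) a = - dot b a.
Proof. by rewrite dotC dotNr dotC. Qed.

Lemma fin_of_grad {f : V -> \bar R} {x d} : is_grad f x d -> f x \is a fin_num.
Proof. by case=> + _ _; apply: nbhs_singleton. Qed.

Lemma grad_ineq (f : V -> \bar R) x d y :
  convex_fun f -> proper_fun f -> is_grad f x d ->
  (f x + (dot d (y - x))%:E <= f y)%E.
Proof.
move=> cf [pf _] gr.
have fx := fin_of_grad gr.
case: (ltP (f y) +oo%E) => [fyoo|]; last first.
  by rewrite leye_eq => /eqP ->; rewrite leey.
have fy : f y \is a fin_num by rewrite fin_numE pf /= -ltey.
set v := y - x.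
have key : forall t, 0 < t <= 1 ->
    fine (f (t *: v + x)) <= t * fine (f y) + (1 - t) * fine (f x).
  move=> t /andP[t0 t1].
  have := cf y x t; rewrite t1 ltW //= => /(_ isT).
  have -> : t *: y + (1 - t) *: x = t *: v + x.
    by rewrite /v scalerBr scalerBl scale1r [x - _]addrC addrA.
  rewrite -(fineK fy) -(fineK fx) -!EFinM -EFinD => h.
  have fz : f (t *: v + x) \is a fin_num.
    by rewrite fin_numE pf /= -ltey; apply: (le_lt_trans h); rewrite ltry.
  by rewrite -lee_fin (fineK fz).
case: gr => _ dif dd.
have HQ : (fun h => h^-1 *: ((fine \o f \o shift x) (h *: v) - (fine \o f) x)) @ 0^'+
     --> 'D_v (fine \o f) x.
  exact: (cvg_dnbhs_at_right (diff_derivable dif)).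
rewrite -(fineK fx) -(fineK fy) -EFinD lee_fin -lerBrDl -(dd v) -deriveE //.
rewrite -(cvg_lim _ HQ) //.
apply: limr_le; first exact: cvgP HQ.
near=> t.
have t0 : 0 < t by near: t; exact: nbhs_right_gt.
have t1 : t <= 1 by near: t; exact: nbhs_right_le.
rewrite /= /shift.
have := key t; rewrite t0 t1 => /(_ isT) h.
rewrite -[_ *: _]/(t^-1 * _) ler_pdivrMl // mulrBr.
rewrite mulrBl mul1r in h; lra.
Unshelve. all: by end_near.
Qed.

Lemma conj_ge (h : V -> \bar R) u y : ((dot u y)%:E - h y <= conjugate h u)%E.
Proof. by apply: ereal_sup_ubound; exists y. Qed.

Lemma conj_argmin (Psi : V -> \bar R) d s0 : proper_fun Psi -> s0 \in lin_argmin Psi d ->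
  Psi s0 \is a fin_num -> conjugate Psi (- d) = (dot (- d) s0 - fine (Psi s0))%:E.
Proof.
move=> [pP _] hs fs; apply/le_anti/andP; split; last first.
  by rewrite EFinB (fineK fs); apply: conj_ge.
apply/ereal_supP => _ [y _ <-].
move: hs; rewrite in_setE /lin_argmin => /(_ y).
move: (pP y); case: (Psi y) => [r| |] // _.
  have -> : Psi s0 = (fine (Psi s0))%:E by rewrite fineK.
  rewrite -!EFinD -?EFinB !lee_fin !dotNl /= => h; lra.
by rewrite /= leNye.
Qed.

Lemma conj_grad (f : V -> \bar R) x d : convex_fun f -> proper_fun f -> is_grad f x d ->
  conjugate f d = (dot d x - fine (f x))%:E.
Proof.
move=> cf pf gr; have fx := fin_of_grad gr.
apply/le_anti/andP; split; last first.
  by rewrite EFinB (fineK fx); apply: conj_ge.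
apply/ereal_supP => _ [y _ <-].
have := @grad_ineq f x d y cf pf gr.
move: (pf.1 y); case: (f y) => [r| |] // _.
  have -> : f x = (fine (f x))%:E by rewrite fineK.
  rewrite -!EFinD -?EFinB !lee_fin dotBr => h; lra.
by rewrite /= leNye.
Qed.

Arguments conj_argmin {Psi d s0}.
Arguments conj_grad {f x d}.

Lemma subdiff_conj (Psi : V -> \bar R) d s0 : proper_fun Psi -> s0 \in lin_argmin Psi d ->
  Psi s0 \is a fin_num -> s0 \in subdiff (conjugate Psi) (- d).
Proof.
move=> pP hs fs; rewrite in_setE /subdiff (conj_argmin pP hs fs); split => // w.
apply: le_trans (conj_ge Psi w s0).
have -> : Psi s0 = (fine (Psi s0))%:E by rewrite fineK.
rewrite -EFinD -?EFinB lee_fin.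
rewrite opprK dotDr dotNl (dotC s0 w) (dotC s0 d); lra.
Qed.

Lemma gap_ge0 (f Psi : V -> \bar R) y u : f y \is a fin_num -> Psi y \is a fin_num ->
  (0 <= gap f Psi y u)%E.
Proof.
move=> fy py; rewrite /gap.
apply: le_trans (leeD (leeD (lexx (f y + Psi y)) (conj_ge f u y)) (conj_ge Psi (- u) y)).
have -> : f y = (fine (f y))%:E by rewrite fineK.
have -> : Psi y = (fine (Psi y))%:E by rewrite fineK.
rewrite -!EFinB -!EFinD lee_fin dotNl; lra.
Qed.

Lemma gap_shift (f Psi : V -> \bar R) y z u a b a' b' : f y = a%:E -> Psi y = b%:E ->
  f z = a'%:E -> Psi z = b'%:E ->
  gap f Psi z u = (gap f Psi y u + ((a' + b') - (a + b))%:E)%E.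
Proof.
move=> h1 h2 h3 h4; rewrite /gap h1 h2 h3 h4 -!EFinD [RHS]addeC !addeA -!EFinD.
by congr (_ + _ + _)%E; congr EFin; ring.
Qed.

End Aux.
Arguments fin_of_grad {R n f x d}.
Arguments conj_argmin {R n Psi d s0}.
Arguments conj_grad {R n f x d}.
Arguments subdiff_conj {R n Psi d s0}.
Arguments gap_ge0 {R n f Psi y u}.
Arguments gap_shift {R n f Psi y z u a b a' b'}.

Section RealAux.
Variable R : realType.

Lemma bernoulli_powR (x p : R) : 0 <= x < 1 -> 0 < p ->
  1 + p * x <= powR (1 - x) (- p).
Proof.
move=> /andP[x0 x1] p0.
rewrite /powR ifF; last by apply/negbTE; rewrite subr_eq0 gt_eqF.
apply: le_trans (expR_ge1Dx _); rewrite lerD2l mulNr -mulrN ler_pM2l //.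
have := @le_ln1Dx R (- x); rewrite ltrN2 x1 => /(_ isT).
by rewrite lerNr.
Qed.

Lemma step_bound (b G b' q r M : R) : 0 <= b -> b <= G -> 0 <= r <= 1 -> 1 < q -> 0 < M ->
 (forall t, 0 <= t <= 1 -> b' <= b - t * G + M * powR t q / q * powR G r) ->
 b' <= b * (1 - (q-1)/q * Num.min 1 (powR (powR b (1-r) * M^-1) (1/(q-1)))).
Proof.
move=> b0 bG /andP[r0 r1] q1 M0 H.
have q0 : 0 < q by lra.
have q0' : q != 0 by rewrite gt_eqF.
have [b00|bpos] := eqVneq b 0.
  subst b; rewrite mul0r; have := H 0; rewrite lexx ler01 => /(_ isT) h.
  by apply: (le_trans h); rewrite powR0 //; lra.
have {}bpos : 0 < b by rewrite lt_neqAle eq_sym bpos.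
have Gpos : 0 < G := lt_le_trans bpos bG.
set a := powR (powR b (1-r) * M^-1) (1/(q-1)).
set m := Num.min 1 a.
have m0 : 0 <= m by rewrite le_min ler01 powR_ge0.
have m1 : m <= 1 by rewrite ge_min lexx.
have ma : m <= a by rewrite ge_min lexx orbT.
apply: (le_trans (H m _)); first by rewrite m0 m1.
have Hq : powR m q = m * powR m (q - 1).
  transitivity (powR m (1 + (q - 1))); first by rewrite addrC subrK.
  rewrite (@powRD _ m 1 (q - 1)) ?powRr1 //.
  by rewrite addrCA subrr addr0 (negbTE q0').
have H1 : M * powR m (q - 1) <= powR b (1 - r).
  have : powR m (q - 1) <= powR a (q - 1).
    by apply: ge0_ler_powR => //; rewrite ?subr_ge0 ?ltW // nnegrE ?powR_ge0.
  rewrite /a -powRrM mul1r mulVf ?subr_eq0 ?gt_eqF // powRr1; last first.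
    by rewrite mulr_ge0 ?powR_ge0 // invr_ge0 ltW.
  by rewrite -(ler_pM2l M0) mulrCA mulfV ?gt_eqF // mulr1.
have H2 : powR b (1 - r) * powR G r <= G.
  apply: (@le_trans _ _ (powR G (1 - r) * powR G r)).
    apply: ler_wpM2r; first exact: powR_ge0.
    by apply: ge0_ler_powR => //; rewrite ?subr_ge0 // nnegrE ltW.
  rewrite -powRD; last by rewrite subrK oner_eq0.
  by rewrite subrK powRr1 // ltW.
have H3 : M * powR m q / q * powR G r <= m * G / q.
  rewrite Hq.
  apply: (@le_trans _ _ (m / q * (powR b (1-r) * powR G r))).
    rewrite (_ : M * _ / q * _ = m / q * (M * powR m (q-1) * powR G r)); last by ring.
    apply: ler_wpM2l; first by rewrite divr_ge0 // ltW.
    by apply: ler_wpM2r => //; exact: powR_ge0.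
  rewrite (_ : m * G / q = m / q * G); last by ring.
  by apply: ler_wpM2l => //; rewrite divr_ge0 // ltW.
have e : (q - 1) / q = 1 - q^-1 by rewrite mulrBl mulfV // mul1r.
have HH : b * (m * ((q - 1) / q)) <= G * (m * ((q - 1) / q)).
  by apply: ler_wpM2r => //; rewrite mulr_ge0 // e subr_ge0 (invf_le1 q0) ltW.
rewrite e in HH *.
nra.
Qed.

Lemma powRN_anti (u v a : R) : 0 < u -> u <= v -> 0 <= a -> powR v (- a) <= powR u (- a).
Proof.
move=> u0 uv a0; rewrite !powRN lef_pV2 ?posrE ?powR_gt0 //; last exact: lt_le_trans uv.
by apply: ge0_ler_powR => //; rewrite nnegrE ltW //; exact: lt_le_trans uv.
Qed.

Arguments powRN_anti {u v a}.

Lemma powR_invK (y p : R) : 0 < y -> p != 0 -> powR (powR y (- p)) (- p^-1) = y.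
Proof.
move=> y0 p0; by rewrite -powRrM mulrNN mulfV // powRr1 // ltW.
Qed.

Arguments powR_invK {y p}.

Lemma rate (b : nat -> R) (k0 : nat) (c p : R) : 0 < c -> 0 < p -> (forall k, 0 <= b k) ->
 (forall k, (k0 <= k)%N -> b k.+1 <= b k * (1 - c * powR (b k) p)) ->
 (forall k, (k0 <= k)%N -> c * powR (b k) p < 1) ->
 forall k, (k0 <= k)%N -> b k <= powR (powR (b k0) (- p) + p * c * (k - k0)%:R) (- p^-1).
Proof.
move=> c0 p0 b0 hb hc k kk0.
have [bk00|bk0pos] := eqVneq (b k0) 0.
  suff -> : b k = 0 by exact: powR_ge0.
  rewrite -(subnKC kk0); elim: (k - k0)%N => [|d IH]; first by rewrite addn0.
  apply: le_anti; rewrite b0 andbT addnS.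
  by apply: (le_trans (hb _ (leq_addr _ _))); rewrite IH mul0r.
have {}bk0pos : 0 < b k0 by rewrite lt_neqAle eq_sym bk0pos b0.
set A := powR (b k0) (- p).
have A0 : 0 < A by rewrite powR_gt0.
have Q : forall d, b (k0 + d)%N = 0 \/
   (0 < b (k0 + d)%N /\ A + p * c * d%:R <= powR (b (k0 + d)%N) (- p)).
  elim=> [|d IH]; first by right; rewrite addn0 mulr0 addr0.
  have [->|bpos] := eqVneq (b (k0 + d.+1)%N) 0; first by left.
  have {}bpos : 0 < b (k0 + d.+1)%N by rewrite lt_neqAle eq_sym bpos b0.
  right; split => //.
  have hk := hb _ (leq_addr d k0); have hck := hc _ (leq_addr d k0).
  rewrite addnS in bpos *.
  case: IH => [bz|[bkpos IH]].
    by move: hk; rewrite bz mul0r => /(lt_le_trans bpos); rewrite ltxx.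
  set pb := powR (b (k0 + d)%N) p in hk hck.
  have pb0 : 0 <= pb by exact: powR_ge0.
  have cpb0 : 0 < 1 - c * pb by rewrite subr_gt0.
  eapply le_trans; last exact: (powRN_anti bpos hk (ltW p0)).
  rewrite powRM ?(ltW bkpos) ?(ltW cpb0) //.
  have := @bernoulli_powR (c * pb) p; rewrite mulr_ge0 ?(ltW c0) //= hck => /(_ isT p0) hB.
  eapply le_trans; last exact: (ler_wpM2l (powR_ge0 _ _) hB).
  have e : powR (b (k0 + d)%N) (- p) * pb = 1.
    by rewrite /pb powRN mulVf // gt_eqF // powR_gt0.
  rewrite (_ : _ * (1 + p * (c * pb)) = b (k0 + d)%N `^ (- p) + p * c * (b (k0 + d)%N `^ (- p) * pb)); last by ring.
  rewrite e mulr1 mulrS.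
  lra.
have := Q (k - k0)%N; rewrite (subnKC kk0) => -[->|[bkpos H]]; first exact: powR_ge0.
rewrite -{1}(powR_invK bkpos (lt0r_neq0 p0)).
apply: powRN_anti; last by rewrite invr_ge0 ltW.
  by apply: (lt_le_trans A0); rewrite lerDl mulr_ge0 // mulr_ge0 // ltW.
exact: H.
Qed.
End RealAux.
Arguments powRN_anti {R u v a}.
Arguments powR_invK {R y p}.
Arguments step_bound {R b G b' q r M}.

Theorem theorem1 (R : realType) (n : nat) (f Psi : 'rV[R]_n -> \bar R)
  (x g s : nat -> 'rV[R]_n) (theta : nat -> R) (q r M : R) :
  cpc f -> cpc Psi ->
  (* (A1) f is differentiable on dom(Psi) *)
  (forall y, y \in dom Psi -> exists d, is_grad f y d) ->
  (* (A2) *)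
  (forall y d, y \in dom f -> is_grad f y d -> exists s0, s0 \in lin_argmin Psi d) ->
  (* conditional gradient iterates with exact line search *)
  x 0%N \in dom Psi ->
  (forall k, is_grad f (x k) (g k)) ->
  (forall k, s k \in lin_argmin Psi (g k)) ->
  (forall k, 0 <= theta k <= 1 /\
     forall t, 0 <= t <= 1 ->
       ((1 - theta k)%:E * gap f Psi (x k) (g k) + Dcal f Psi (g k) (x k) (s k) (theta k)
        <= (1 - t)%:E * gap f Psi (x k) (g k) + Dcal f Psi (g k) (x k) (s k) t)%E) ->
  (forall k, x k.+1 = (1 - theta k) *: x k + theta k *: s k) ->
  (* (q,r)-growth *)
  1 < q -> 0 <= r <= 1 -> 0 < M -> growth f Psi q r M ->
  [/\ (forall k : nat,
         (best_gap f Psi x g k.+1 <= best_gap f Psi x g k *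
            (1%:E - ((q - 1) / q)%:E *
               Order.min 1%E (poweR (poweR (best_gap f Psi x g k) (1 - r) * (M^-1)%:E)
                                    (1 / (q - 1)))))%E),
      (r = 1 -> forall k : nat,
         (best_gap f Psi x g k <= best_gap f Psi x g 0%N *
            ((1 - (q - 1) / q * Order.min 1 (powR M (- 1 / (q - 1)))) ^+ k)%:E)%E) &
      (r < 1 -> forall k0 : nat,
         (poweR (best_gap f Psi x g k0) (1 - r) <= M%:E)%E ->
         (forall k : nat, (k < k0)%N -> ~ (poweR (best_gap f Psi x g k) (1 - r) <= M%:E)%E) ->
         (forall k : nat, (k <= k0)%N ->
            (best_gap f Psi x g k <= best_gap f Psi x g 0%N * ((1 - (q - 1) / q) ^+ k)%:E)%E) /\
         (forall k : nat, (k0 <= k)%N ->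
            (best_gap f Psi x g k <=
               poweR (poweR (best_gap f Psi x g k0) ((r - 1) / (q - 1)) +
                      ((1 - r) / q * powR M (- 1 / (q - 1)) * (k - k0)%:R)%:E)
                     ((q - 1) / (r - 1)))%E))].
Proof.
move=> [_ pf cvf] [_ pP cvP] _ _ x0d gr sarg ls xrec q1 /andP[r0 r1] M0 grow.
have fxf k : f (x k) \is a fin_num := fin_of_grad (gr k).
have domP y : y \in dom Psi -> Psi y \is a fin_num.
  by rewrite in_setE /dom /= => h; rewrite fin_numE pP.1 /= -ltey.
have sd k : x k \in dom Psi -> s k \in dom Psi.
  move=> h; have := sarg k; rewrite in_setE /lin_argmin => /(_ (x k)).
  rewrite in_setE /dom /=; move: (pP.1 (s k)).
  case: (Psi (s k)) => [rr| |] // _; first by rewrite ltry.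
  rewrite addey // -(fineK (domP _ h)) -EFinD leye_eq.
  by [].
have xd k : x k \in dom Psi.
  elim: k => // k IH.
  have := cvP (x k) (s k) (1 - theta k).
  rewrite (_ : 1 - (1 - theta k) = theta k); last by ring.
  have [/andP[t0 t1] _] := ls k.
  rewrite subr_ge0 t1 lerBlDr lerDl t0 -xrec => /(_ isT) h.
  rewrite in_setE /dom /=; apply: (le_lt_trans h).
  rewrite -(fineK (domP _ IH)) -(fineK (domP _ (sd _ IH))) -!EFinM -EFinD.
  by rewrite ltry.
have pxf k : Psi (x k) \is a fin_num := domP _ (xd k).
have psf k : Psi (s k) \is a fin_num := domP _ (sd _ (xd k)).
set fx := fun k => fine (f (x k)).
set px := fun k => fine (Psi (x k)).
set ps := fun k => fine (Psi (s k)).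
have efx k : f (x k) = (fx k)%:E by rewrite /fx fineK.
have epx k : Psi (x k) = (px k)%:E by rewrite /px fineK.
have eps k : Psi (s k) = (ps k)%:E by rewrite /ps fineK.
set Gr := fun k => px k + dot (g k) (x k - s k) - ps k.
have gapG k : gap f Psi (x k) (g k) = (Gr k)%:E.
  rewrite /gap (conj_grad cvf pf (gr k)) (conj_argmin pP (sarg k) (psf k)).
  rewrite efx epx -!EFinD /Gr -/(ps k) -/(fx k); congr EFin.
  rewrite dotNl dotBr /=; ring.
set Dl := fun k => (fx k.+1 + px k.+1) - (fx k + px k).
have gapS k i : gap f Psi (x k.+1) (g i) = (gap f Psi (x k) (g i) + (Dl k)%:E)%E.
  exact: gap_shift.
have gap0 k i : (0 <= gap f Psi (x k) (g i))%E := gap_ge0 (fxf k) (pxf k).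
set B := best_gap f Psi x g.
have BG k : (B k <= (Gr k)%:E)%E.
  by rewrite -gapG; exact: (bigmin_le _ (@ord_max k) (fun i : 'I_k.+1 => gap f Psi (x k) (g i))).
have B0 k : (0 <= B k)%E.
  rewrite /B /best_gap; apply/bigmin_geP; split; first exact: leey.
  by move=> i _; exact: gap0.
have Bfin k : B k \is a fin_num.
  by rewrite fin_numE gt_eqF ?(lt_le_trans _ (B0 k)) ?ltNy0 //= -ltey (le_lt_trans (BG k)) ?ltry.
set b := fun k => fine (B k).
have eB k : B k = (b k)%:E by rewrite /b fineK.
have b0 k : 0 <= b k by rewrite -lee_fin -eB.
have bG k : b k <= Gr k by rewrite -lee_fin -eB.
have BS k : b k.+1 <= b k + Dl k.
  rewrite -lee_fin -(eB k.+1) EFinD -(eB k) -leeBlDr //.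
  rewrite {2}/B /best_gap; apply/bigmin_geP; split; first exact: leey.
  move=> i _; rewrite leeBlDr // -gapS.
  exact: (bigmin_le _ (widen_ord (leqnSn k.+1) i) (fun i : 'I_k.+2 => gap f Psi (x k.+1) (g i))).
have Dth k : Dcal f Psi (g k) (x k) (s k) (theta k) = (Dl k + theta k * Gr k)%:E.
  have ex : x k + theta k *: (s k - x k) = x k.+1.
    by rewrite xrec scalerBr scalerBl scale1r addrA addrAC.
  rewrite /Dcal /bregman ex efx efx epx epx eps -!EFinM -!EFinB.
  have ex2 : x k.+1 - x k = theta k *: (s k - x k) by rewrite -ex addrAC subrr add0r.
  rewrite ex2 dotZr /Dl /Gr !dotBr; congr EFin; ring.
have hkey k t : 0 <= t <= 1 -> Dl k <= - t * Gr k + M * powR t q / q * powR (Gr k) r.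
  move=> t01; have [_ H] := ls k; have := H t t01.
  have := grow _ _ _ (xd k) (gr k) (subdiff_conj pP (sarg k) (psf k)) t t01.
  rewrite gapG poweR_EFin Dth -!EFinM => h1 h2.
  have := le_trans h2 (leeD2l _ h1); rewrite -!EFinD lee_fin.
  lra.
have r01 : 0 <= r <= 1 by rewrite r0 r1.
set w := (q - 1) / q.
have q0 : 0 < q by lra.
have w0 : 0 < w by rewrite divr_gt0 // subr_gt0.
have w1 : w < 1 by rewrite ltr_pdivrMr // mul1r; lra.
set mk := fun k => Num.min 1 (powR (powR (b k) (1 - r) * M^-1) (1 / (q - 1))).
have mk0 k : 0 <= mk k by rewrite le_min ler01 powR_ge0.
have mk1 k : mk k <= 1 by rewrite ge_min lexx.
have hstep k : b k.+1 <= b k * (1 - w * mk k).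
  apply: (step_bound (b0 k) (bG k) r01 q1 M0) => t t01.
  by apply: le_trans (BS k) _; have := hkey k t t01; lra.
have bdec k : b k.+1 <= b k.
  apply: (le_trans (hstep k)); rewrite ler_piMr // lerBlDr lerDl.
  by rewrite mulr_ge0 // ltW.
have eM : powR (M^-1) (1 / (q - 1)) = powR M (-1 / (q - 1)).
  by rewrite -powR_inv1 ?ltW // -powRrM; congr powR; ring.
split.
- move=> k; rewrite !eB !poweR_EFin -EFin_min -EFinM lee_fin.
  exact: hstep.
- move=> r1E k; subst r.
  set c := 1 - w * Num.min 1 (powR M (-1 / (q - 1))).
  have c0 : 0 <= c.
    rewrite subr_ge0; apply: le_trans (ltW w1); by rewrite ger_pMr // ge_min lexx.
  rewrite !eB -EFinM lee_fin.
  elim: k => [|k IH]; first by rewrite expr0 mulr1.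
  apply: (le_trans (hstep k)); rewrite /mk subrr powRr0 mul1r eM -/c.
  by rewrite exprSr mulrA; apply: ler_wpM2r.
- move=> rlt1 k0 hk0 hbef.
  rewrite eB poweR_EFin lee_fin in hk0.
  have hbef' k : (k < k0)%N -> M < powR (b k) (1 - r).
    by move=> kk; have := hbef k kk; rewrite eB poweR_EFin lee_fin => /negP; rewrite -ltNge.
  split.
    move=> k; rewrite !eB -EFinM lee_fin.
    elim: k => [|k IH] kk; first by rewrite expr0 mulr1.
    have kk' : (k < k0)%N by [].
    have m1 : mk k = 1.
      rewrite /mk; apply/min_l.
      have h1 : 1 <= powR (b k) (1 - r) * M^-1.
        by rewrite ler_pdivlMr // mul1r ltW // hbef'.
      have h2 := @ler_powR _ _ h1 0 (1 / (q - 1)); rewrite powRr0 in h2.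
      by apply: h2; rewrite divr_ge0 // subr_ge0 ltW.
    apply: (le_trans (hstep k)); rewrite m1 mulr1.
    rewrite exprSr mulrA; apply: ler_wpM2r; first by rewrite subr_ge0 ltW.
    by apply: IH; apply: ltnW.
  move=> k kk0.
  have bmon d : b (k0 + d)%N <= b k0.
    elim: d => [|d IH]; first by rewrite addn0.
    by rewrite addnS; apply: le_trans (bdec _) IH.
  have hM j : (k0 <= j)%N -> powR (b j) (1 - r) <= M.
    move=> jj; apply: le_trans hk0; rewrite -(subnKC jj).
    by apply: ge0_ler_powR; rewrite ?subr_ge0 ?nnegrE ?b0 ?(ltW rlt1) // bmon.
  have hq1 : q - 1 != 0 by rewrite subr_eq0 gt_eqF.
  have hr1 : r - 1 != 0 by rewrite subr_eq0 lt_eqF.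
  have hq0 : q != 0 by rewrite gt_eqF.
  set p := (1 - r) / (q - 1).
  set Mq := powR M (-1 / (q - 1)).
  set c := w * Mq.
  have p0 : 0 < p by rewrite divr_gt0 // subr_gt0.
  have c0 : 0 < c by rewrite mulr_gt0 // powR_gt0.
  have mkE j : (k0 <= j)%N -> mk j = powR (b j) p * Mq.
    move=> jj; rewrite /mk min_r; last first.
      have hr : powR (b j) (1 - r) * M^-1 <= 1 by rewrite ler_pdivrMr // mul1r hM.
      have nn : 0 <= powR (b j) (1 - r) * M^-1 by rewrite mulr_ge0 ?powR_ge0 // invr_ge0 ltW.
      have e0 : 0 <= 1 / (q - 1) by rewrite divr_ge0 // subr_ge0 ltW.
      apply: (@le_trans _ _ (powR 1 (1 / (q - 1)))); last by rewrite powR1.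
      by apply: ge0_ler_powR => //; rewrite nnegrE.
    rewrite powRM ?powR_ge0 ?invr_ge0 ?(ltW M0) // eM -powRrM.
    by congr (powR _ _ * _); rewrite /p; ring.
  have hrec j : (k0 <= j)%N -> b j.+1 <= b j * (1 - c * powR (b j) p).
    move=> jj; apply: le_trans (hstep j) _; rewrite mkE //.
    by rewrite (_ : w * (_ * Mq) = c * powR (b j) p) // /c; ring.
  have hc j : (k0 <= j)%N -> c * powR (b j) p < 1.
    move=> jj; have := mk1 j; rewrite mkE // => h.
    rewrite (_ : c * _ = w * (powR (b j) p * Mq)); last by rewrite /c; ring.
    by apply: le_lt_trans w1; rewrite ger_pMr.
  have := @rate _ b k0 c p c0 p0 b0 hrec hc k kk0.
  rewrite !eB !poweR_EFin lee_fin.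
  have e1 : (r - 1) / (q - 1) = - p by rewrite /p; ring.
  have e2 : (1 - r) / q * Mq = p * c.
    by rewrite /p /c /w -!mulrA; congr (_ * _); rewrite !mulrA mulVf // mul1r.
  have e3 : (q - 1) / (r - 1) = - p^-1 by rewrite /p invf_div -mulrN -invrN opprB.
  by rewrite e1 e2 e3.
Qed.
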